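(* Let $\mathcal{A}=\mathcal{R}*_K\mathcal{S}*_L\mathcal{T}\in\mathbb{C}^{I_1\times\cdots\times I_N\times J_1\times\cdots\times J_M}$, where $\mathcal{R}\in\mathbb{C}^{I_1\times\cdots\times I_N\times H_1\times\cdots\times H_K}$, $\mathcal{S}\in\mathbb{C}^{H_1\times\cdots\times H_K\times G_1\times\cdots\times G_L}$ and $\mathcal{T}\in\mathbb{C}^{G_1\times\cdots\times G_L\times J_1\times\cdots\times J_M}$, and let $\mathcal{B}=\mathcal{T}^{\dagger}*_L(\mathcal{A}*_M\mathcal{T}^{\dagger})^{\dagger}$ and $\mathcal{C}=(\mathcal{R}^{\dagger}*_N\mathcal{A})^{\dagger}*_K\mathcal{R}^{\dagger}$. Then $\mathcal{B}=\mathcal{A}^{\dagger}$ if and only if $\mathcal{C}=\mathcal{A}_{\pi\dagger}$; and $\mathcal{B}=\mathcal{A}_{\pi\dagger}$ if and only if $\mathcal{C}=\mathcal{A}^{\dagger}$.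
   Context: $\mathbb{C}^{I_1\times\cdots\times I_N}$ denotes the set of complex tensors of order $N$ and dimension $I_1\times\cdots\times I_N$. For $\mathcal{A}\in\mathbb{C}^{I_1\times\cdots\times I_N\times K_1\times\cdots\times K_N}$ and $\mathcal{B}\in\mathbb{C}^{K_1\times\cdots\times K_N\times J_1\times\cdots\times J_M}$, the Einstein product $\mathcal{A}*_N\mathcal{B}$ is defined by $(\mathcal{A}*_N\mathcal{B})_{i_1\dots i_N j_1\dots j_M}=\sum_{k_1,\dots,k_N}a_{i_1\dots i_N k_1\dots k_N}b_{k_1\dots k_N j_1\dots j_M}$; it is associative. $\mathcal{A}^H$ denotes the conjugate transpose. For $\mathcal{A}\in\mathbb{C}^{I_1\times\cdots\times I_N\times J_1\times\cdots\times J_M}$ the Moore–Penrose inverse $\mathcal{A}^{\dagger}$ is the unique $\mathcal{X}\in\mathbb{C}^{J_1\times\cdots\times J_M\times I_1\times\cdots\times I_N}$ with $\mathcal{A}*_M\mathcal{X}*_N\mathcal{A}=\mathcal{A}$, $\mathcal{X}*_N\mathcal{A}*_M\mathcal{X}=\mathcal{X}$, $(\mathcal{A}*_M\mathcal{X})^H=\mathcal{A}*_M\mathcal{X}$, $(\mathcal{X}*_N\mathcal{A})^H=\mathcal{X}*_N\mathcal{A}$. Given the factorization $\mathcal{A}=\mathcal{R}*_K\mathcal{S}*_L\mathcal{T}$, the product Moore–Penrose inverse of $\mathcal{A}$ is $\mathcal{A}_{\pi\dagger}=\mathcal{T}^{\dagger}*_L(\mathcal{R}^{\dagger}*_N\mathcal{A}*_M\mathcal{T}^{\dagger})^{\dagger}*_K\mathcal{R}^{\dagger}$.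 *)

(* Defs.v *)
From HB Require Import structures.
From mathcomp Require Import all_boot all_order all_algebra.
From mathcomp Require Import reals complex.
From Stdlib Require Import ClassicalEpsilon.
Set Implicit Arguments. Unset Strict Implicit. Unset Printing Implicit Defensive.
Import Order.TTheory GRing.Theory Num.Theory.
Local Open Scope ring_scope.

Definition idx (d : seq nat) := {dffun forall k : 'I_(size d), 'I_(nth 0%N d k)}.

Section Tensors.
Variable R : realType.
Local Notation C := (R[i]).

(* tensor dI dJ = C^{I_1 x ... x I_N x J_1 x ... x J_M}, entries indexed by
   the pair of multi-indices (i_1..i_N, j_1..j_M). *)
Definition tensor (dI dJ : seq nat) := {ffun idx dI * idx dJ -> C}.

Definition einstein dI dK dJ (A : tensor dI dK) (B : tensor dK dJ) : tensor dI dJ :=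
  [ffun ij => \sum_(k : idx dK) A (ij.1, k) * B (k, ij.2)].

Definition ctrans dI dJ (A : tensor dI dJ) : tensor dJ dI :=
  [ffun ji => (A (ji.2, ji.1))^*].

Definition is_MP dI dJ (A : tensor dI dJ) (X : tensor dJ dI) : bool :=
  [&& einstein (einstein A X) A == A,
      einstein (einstein X A) X == X,
      ctrans (einstein A X) == einstein A X &
      ctrans (einstein X A) == einstein X A].

(* Moore--Penrose inverse: the (unique) X satisfying the Penrose equations
   (default 0 if none existed; it always exists over C). *)
Definition MP dI dJ (A : tensor dI dJ) : tensor dJ dI :=
  match excluded_middle_informative (exists X, is_MP A X) with
  | left h => xchoose h
  | right _ => 0
  end.

Definition prodMP dI dH dG dJ (Rt : tensor dI dH) (T : tensor dG dJ)
  (A : tensor dI dJ) : tensor dJ dI :=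
  einstein (einstein (MP T) (MP (einstein (einstein (MP Rt) A) (MP T)))) (MP Rt).

End Tensors.

(* Main.v *)
Require Import Defs.
From HB Require Import structures.
From mathcomp Require Import all_boot all_order all_algebra.
From mathcomp Require Import reals complex.
From Stdlib Require Import ClassicalEpsilon.
Set Implicit Arguments. Unset Strict Implicit. Unset Printing Implicit Defensive.
Import Order.TTheory GRing.Theory Num.Theory.
Local Open Scope ring_scope.

Section MX.
Variable R : realType.
Local Notation C := (R[i]).

Definition mxH m n (M : 'M[C]_(m, n)) : 'M[C]_(n, m) := \matrix_(i, j) (M j i)^*.

Lemma mxHK m n (M : 'M[C]_(m, n)) : mxH (mxH M) = M.
Proof. by apply/matrixP => i j; rewrite !mxE conjCK. Qed.

Lemma mxH_mul m n p (A : 'M[C]_(m, n)) (B : 'M[C]_(n, p)) :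
  mxH (A *m B) = mxH B *m mxH A.
Proof.
apply/matrixP => i j; rewrite !mxE rmorph_sum; apply: eq_bigr => k _.
by rewrite !mxE rmorphM mulrC.
Qed.

Lemma mxH1 n : mxH (1%:M : 'M[C]_n) = 1%:M.
Proof. by apply/matrixP => i j; rewrite !mxE eq_sym rmorph_nat. Qed.

Lemma mxHE m n (M : 'M[C]_(m, n)) : mxH M = (map_mx Num.conj M)^T.
Proof. by apply/matrixP => i j; rewrite !mxE. Qed.

Lemma gram_unit r n (G : 'M[C]_(r, n)) : row_free G -> G *m mxH G \in unitmx.
Proof.
move=> fG; rewrite -row_free_unit; apply/inj_row_free => v Hv.
apply: (row_free_inj fG); rewrite mul0mx.
set w := v *m G.
have H0 : w *m mxH w = 0 by rewrite /w mxH_mul -mulmxA (mulmxA G) mulmxA Hv mul0mx.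
have H1 : \sum_j w 0 j * (w 0 j)^* = 0.
  have := congr1 (fun M : 'M[C]_1 => M 0 0) H0; rewrite /= !mxE => H2.
  apply: etrans H2; by apply: eq_bigr => k _; rewrite [mxH w k 0]mxE.
have pos : forall k, predT k -> 0 <= w 0 k * (w 0 k)^* by move=> k _; rewrite -normCK exprn_ge0.
apply/matrixP => i j; rewrite (ord1 i) [(0 : 'M[C]_(1,n)) 0 j]mxE.
have := @psumr_eq0P _ _ predT (fun j => w 0 j * (w 0 j)^*) pos H1 j isT.
by rewrite -normCK => /eqP; rewrite sqrf_eq0 normr_eq0 => /eqP.
Qed.

Lemma herm_inv n (M : 'M[C]_n) : M \in unitmx -> mxH M = M -> mxH (invmx M) = invmx M.
Proof.
move=> uM hM.
have e : mxH (invmx M) *m M = 1%:M by rewrite -{2}hM -mxH_mul mulmxV // mxH1.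
by rewrite -[mxH _]mulmx1 -(mulmxV uM) mulmxA e mul1mx.
Qed.

Definition is_mp m n (A : 'M[C]_(m, n)) (X : 'M[C]_(n, m)) :=
  [/\ A *m X *m A = A, X *m A *m X = X, mxH (A *m X) = A *m X & mxH (X *m A) = X *m A].

Lemma mp_fact m r n (F : 'M[C]_(m, r)) (G : 'M[C]_(r, n)) :
  row_free G -> row_free (mxH F) -> exists X, is_mp (F *m G) X.
Proof.
move=> fG fF.
have u1 := gram_unit fG; have u2 := gram_unit fF.
rewrite mxHK in u2.
set M1 := G *m mxH G in u1 *; set M2 := mxH F *m F in u2 *.
have h1 : mxH M1 = M1 by rewrite /M1 mxH_mul mxHK.
have h2 : mxH M2 = M2 by rewrite /M2 mxH_mul mxHK.
exists (mxH G *m invmx M1 *m invmx M2 *m mxH F).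
have eAX : (F *m G) *m (mxH G *m invmx M1 *m invmx M2 *m mxH F) = F *m invmx M2 *m mxH F.
  by rewrite -!mulmxA (mulmxA G) -/M1 (mulmxA M1) mulmxV // mul1mx.
have eXA : (mxH G *m invmx M1 *m invmx M2 *m mxH F) *m (F *m G) = mxH G *m invmx M1 *m G.
  by rewrite !mulmxA -(mulmxA _ (mxH F)) -/M2 -(mulmxA _ _ M2) mulVmx // mulmx1.
split.
- by rewrite eAX !mulmxA -(mulmxA _ (mxH F)) -/M2 -(mulmxA _ _ M2) mulVmx // mulmx1.
- by rewrite eXA -!mulmxA (mulmxA G) -/M1 (mulmxA M1) mulmxV // mul1mx.
- by rewrite eAX !mxH_mul mxHK herm_inv // mulmxA.
- by rewrite eXA !mxH_mul mxHK herm_inv // mulmxA.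
Qed.

Lemma mp_exists m n (A : 'M[C]_(m, n)) : exists X, is_mp A X.
Proof.
rewrite -[A]mulmx_base; apply: mp_fact; first exact: row_base_free.
rewrite /row_free mxHE mxrank_tr mxrank_map.
by have := col_base_full A; rewrite /row_full.
Qed.
End MX.

Section Tens.
Variable R : realType.
Local Notation C := (R[i]).

Definition tm dI dJ (A : tensor R dI dJ) : 'M[C]_(#|idx dI|, #|idx dJ|) :=
  \matrix_(i, j) A (enum_val i, enum_val j).
Definition mt dI dJ (M : 'M[C]_(#|idx dI|, #|idx dJ|)) : tensor R dI dJ :=
  [ffun ij => M (enum_rank ij.1) (enum_rank ij.2)].

Lemma mtK dI dJ (M : 'M[C]_(#|idx dI|, #|idx dJ|)) : tm (mt M) = M.
Proof. by apply/matrixP => i j; rewrite !mxE ffunE /= !enum_valK. Qed.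

Lemma tm_inj dI dJ : injective (@tm dI dJ).
Proof.
move=> A B e; apply/ffunP => [[i j]].
move/matrixP/(_ (enum_rank i) (enum_rank j)): e.
by rewrite !mxE !enum_rankK.
Qed.

Lemma tm_ein dI dK dJ (A : tensor R dI dK) (B : tensor R dK dJ) :
  tm (einstein A B) = tm A *m tm B.
Proof.
apply/matrixP => i j; rewrite !mxE ffunE /=.
rewrite (reindex (enum_val : 'I_#|idx dK| -> idx dK)) /=.
  by apply: eq_bigr => k _; rewrite !mxE.
by exists enum_rank => x _; [rewrite enum_valK | rewrite enum_rankK].
Qed.

Lemma tm_ct dI dJ (A : tensor R dI dJ) : tm (ctrans A) = mxH (tm A).
Proof. by apply/matrixP => i j; rewrite !mxE ffunE. Qed.

Local Notation "A ** B" := (einstein A B) (at level 40, left associativity).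
Local Notation ct := ctrans.

Lemma einA dI dJ dK dL (A : tensor R dI dJ) (B : tensor R dJ dK) (D : tensor R dK dL) :
  A ** B ** D = A ** (B ** D).
Proof. by apply: tm_inj; rewrite !tm_ein mulmxA. Qed.

Lemma ctK dI dJ (A : tensor R dI dJ) : ct (ct A) = A.
Proof. by apply: tm_inj; rewrite !tm_ct mxHK. Qed.

Lemma ctM dI dJ dK (A : tensor R dI dJ) (B : tensor R dJ dK) :
  ct (A ** B) = ct B ** ct A.
Proof. by apply: tm_inj; rewrite !tm_ct !tm_ein !tm_ct mxH_mul. Qed.

Lemma MP_spec dI dJ (A : tensor R dI dJ) : is_MP A (MP A).
Proof.
rewrite /MP; case: excluded_middle_informative => [h|h]; first exact: xchooseP h.
exfalso; apply: h; have [X [h1 h2 h3 h4]] := mp_exists (tm A).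
exists (mt X); apply/and4P; split; apply/eqP; apply: tm_inj;
  by rewrite ?tm_ct !tm_ein ?mtK.
Qed.

Lemma MP_uniq dI dJ (A : tensor R dI dJ) X :
  A ** X ** A = A -> X ** A ** X = X -> ct (A ** X) = A ** X ->
  ct (X ** A) = X ** A -> X = MP A.
Proof.
have /and4P[/eqP h1 /eqP h2 /eqP h3 /eqP h4] := MP_spec A.
set Y := MP A in h1 h2 h3 h4 *.
move=> g1 g2 g3 g4.
have eX : X = X ** A ** Y.
  transitivity (X ** ct (A ** X)); first by rewrite g3 -einA g2.
  transitivity (X ** ct ((A ** Y) ** (A ** X))); first by rewrite -einA h1.
  by rewrite ctM g3 h3 -!einA g2.
have eY : Y = X ** A ** Y.
  transitivity (ct (Y ** A) ** Y); first by rewrite h4 h2.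
  transitivity (ct (Y ** (A ** X ** A)) ** Y); first by rewrite g1.
  have h2' := h2; rewrite einA in h2'.
  by rewrite !einA -(einA Y A) ctM g4 h4 !einA h2'.
by rewrite eX -eY.
Qed.


Lemma P1 dI dJ (A : tensor R dI dJ) : A ** MP A ** A = A.
Proof. by have /and4P[/eqP h _ _ _] := MP_spec A. Qed.
Lemma P2 dI dJ (A : tensor R dI dJ) : MP A ** A ** MP A = MP A.
Proof. by have /and4P[_ /eqP h _ _] := MP_spec A. Qed.
Lemma P3 dI dJ (A : tensor R dI dJ) : ct (A ** MP A) = A ** MP A.
Proof. by have /and4P[_ _ /eqP h _] := MP_spec A. Qed.
Lemma P4 dI dJ (A : tensor R dI dJ) : ct (MP A ** A) = MP A ** A.
Proof. by have /and4P[_ _ _ /eqP h] := MP_spec A. Qed.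
Lemma P1r dI dJ (A : tensor R dI dJ) : A ** (MP A ** A) = A.
Proof. by rewrite -einA P1. Qed.
Lemma P2r dI dJ (A : tensor R dI dJ) : MP A ** (A ** MP A) = MP A.
Proof. by rewrite -einA P2. Qed.
Lemma P1x dI dJ dK (A : tensor R dI dJ) (Z : tensor R dJ dK) :
  A ** (MP A ** (A ** Z)) = A ** Z.
Proof. by rewrite -!einA P1. Qed.
Lemma P2x dI dJ dK (A : tensor R dI dJ) (Z : tensor R dI dK) :
  MP A ** (A ** (MP A ** Z)) = MP A ** Z.
Proof. by rewrite -!einA P2. Qed.

Definition herm dI (X : tensor R dI dI) := ct X = X.

Lemma Lr dI dK dJ (E : tensor R dI dK) (T : tensor R dK dJ) (A : tensor R dI dJ) :
  E ** T = A -> E ** T ** MP T = E ->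
  (MP T ** MP E = MP A <-> herm (MP T ** (MP E ** E) ** T)).
Proof.
move=> <- hE.
have hEx : forall dL (Z : tensor R dK dL), E ** (T ** (MP T ** Z)) = E ** Z.
  by move=> dL Z; rewrite -!einA hE.
rewrite /herm; split.
- move=> e; have := P4 (E ** T); rewrite -e !einA => ->; by [].
- move=> h; apply: MP_uniq.
  + by rewrite !einA hEx P1x.
  + by rewrite !einA hEx P2r.
  + by rewrite !einA hEx P3.
  + by move: h; rewrite !einA.
Qed.

Lemma Ll dI dK dJ (Rt : tensor R dI dK) (G : tensor R dK dJ) (A : tensor R dI dJ) :
  Rt ** G = A -> MP Rt ** Rt ** G = G ->
  (MP G ** MP Rt = MP A <-> herm (Rt ** (G ** MP G) ** MP Rt)).
Proof.
move=> <- hG.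
have hGr : MP Rt ** (Rt ** G) = G by rewrite -einA hG.
have hGx : forall dL (Z : tensor R dJ dL), MP Rt ** (Rt ** (G ** Z)) = G ** Z.
  by move=> dL Z; rewrite -!einA hG.
rewrite /herm; split.
- move=> e; have := P3 (Rt ** G); rewrite -e !einA => ->; by [].
- move=> h; apply: MP_uniq.
  + by rewrite !einA hGr P1r.
  + by rewrite !einA hGx P2x.
  + by move: h; rewrite !einA.
  + by rewrite !einA hGr P4.
Qed.

Lemma proj_r dI dK dJ (Rt : tensor R dI dK) (K : tensor R dK dJ) (E : tensor R dI dJ) :
  E = Rt ** K -> K = MP Rt ** E -> MP K ** K = MP E ** E.
Proof.
move=> hE hK.
have e1 : K ** MP E ** E = K by rewrite [in LHS]hK !einA P1r -hK.
have e2 : E ** MP K ** K = E by rewrite [in LHS]hE !einA P1r -hE.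
have a : MP K ** K = (MP K ** K) ** (MP E ** E) by rewrite einA -(einA K) e1.
have b : MP E ** E = (MP E ** E) ** (MP K ** K) by rewrite einA -(einA E) e2.
have c : MP E ** E = (MP K ** K) ** (MP E ** E).
  by rewrite -[LHS]P4 {1}b ctM !P4.
by rewrite a -c.
Qed.

Lemma proj_l dI dK dJ (F : tensor R dI dJ) (K : tensor R dI dK) (T : tensor R dK dJ) :
  F = K ** T -> K = F ** MP T -> K ** MP K = F ** MP F.
Proof.
move=> hF hK.
have e1 : F ** MP F ** K = K by rewrite [in LHS]hK -einA P1 -hK.
have e2 : K ** MP K ** F = F by rewrite [in LHS]hF -einA P1 -hF.
have a : K ** MP K = (F ** MP F) ** (K ** MP K) by rewrite -einA e1.
have b : F ** MP F = (K ** MP K) ** (F ** MP F) by rewrite -einA e2.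
have c : F ** MP F = (F ** MP F) ** (K ** MP K).
  by rewrite -[LHS]P3 {1}b ctM !P3.
by rewrite a -c.
Qed.

Lemma D3 dI dJ (A : tensor R dI dJ) : MP A = MP A ** ct (MP A) ** ct A.
Proof. by rewrite einA -ctM P3 P2r. Qed.
Lemma D4 dI dJ (A : tensor R dI dJ) : MP A = ct A ** ct (MP A) ** MP A.
Proof. by rewrite -ctM P4 P2. Qed.

Lemma projR dI dK dJ (Rt : tensor R dI dK) (X : tensor R dI dJ) :
  MP (MP Rt ** X) = MP (MP Rt ** X) ** MP Rt ** Rt.
Proof.
have hR : ct (MP Rt) = ct (MP Rt) ** (MP Rt ** Rt) by rewrite -(P4 Rt) -ctM P2.
set Y := MP Rt ** X.
have e : ct Y = ct Y ** (MP Rt ** Rt) by rewrite /Y ctM einA -hR.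
by rewrite {1}(D3 Y) e -!einA -(D3 Y).
Qed.

Lemma projT dI dK dJ (T : tensor R dK dJ) (X : tensor R dI dJ) :
  MP (X ** MP T) = T ** MP T ** MP (X ** MP T).
Proof.
have hT : ct (MP T) = (T ** MP T) ** ct (MP T) by rewrite -(P3 T) -ctM P2r.
set Y := X ** MP T.
have e : ct Y = (T ** MP T) ** ct Y by rewrite /Y ctM {1}hT !einA.
by rewrite {1}(D4 Y) e !einA -(einA (ct Y)) -(D4 Y).
Qed.

Lemma main dI dJ dH dG (Rt : tensor R dI dH) (T : tensor R dG dJ) (A : tensor R dI dJ) :
  A ** MP T ** T = A -> Rt ** MP Rt ** A = A ->
  (MP T ** MP (A ** MP T) = MP A <-> MP (MP Rt ** A) ** MP Rt = prodMP Rt T A) /\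
  (MP T ** MP (A ** MP T) = prodMP Rt T A <-> MP (MP Rt ** A) ** MP Rt = MP A).
Proof.
move=> fA fA'.
have fAr : A ** (MP T ** T) = A by rewrite -einA fA.
have fA'r : Rt ** (MP Rt ** A) = A by rewrite -einA fA'.
rewrite /prodMP.
have hE : A ** MP T ** T ** MP T = A ** MP T by rewrite fA.
have hK1 : MP Rt ** A ** MP T ** T = MP Rt ** A by rewrite !einA fAr.
have hK2 : MP Rt ** A ** MP T ** T ** MP T = MP Rt ** A ** MP T by rewrite hK1.
have s3 : MP (MP Rt ** A ** MP T) ** (MP Rt ** A ** MP T) = MP (A ** MP T) ** (A ** MP T).
  apply: (proj_r (Rt := Rt)); first by rewrite -!einA fA'.
  by rewrite einA.
split.
- rewrite (Lr fA hE) -s3 -(Lr hK1 hK2); split.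
  + by move=> e; rewrite e.
  + move=> e; rewrite [MP (MP Rt ** A)]projR (einA (MP Rt) A) [MP (MP Rt ** (A ** MP T))]projR.
    by rewrite -(einA (MP Rt) A) -!einA -e.
- have hF : MP Rt ** Rt ** (MP Rt ** A) = MP Rt ** A by rewrite !einA P2x.
  have hK : MP Rt ** Rt ** (MP Rt ** A ** MP T) = MP Rt ** A ** MP T by rewrite !einA P2x.
  have hRK : Rt ** (MP Rt ** A ** MP T) = A ** MP T by rewrite -!einA fA'.
  have s5 : (MP Rt ** A ** MP T) ** MP (MP Rt ** A ** MP T) = (MP Rt ** A) ** MP (MP Rt ** A).
    by apply: (proj_l (T := T)); [rewrite hK1 | ].
  rewrite (Ll fA'r hF) -s5 -(Ll hRK hK); split.
  + move=> e; rewrite [MP (A ** MP T)]projT [MP (MP Rt ** A ** MP T)]projT.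
    by rewrite (einA T (MP T) (MP (A ** MP T))) e -!einA.
  + by move=> e; rewrite -e -einA.
Qed.

End Tens.

Unset Implicit Arguments.
Theorem theorem3p10 (R : realType) (dI dJ dH dG : seq nat)
  (Rt : tensor R dI dH) (S : tensor R dH dG) (T : tensor R dG dJ) :
  let A := einstein (einstein Rt S) T in
  let B := einstein (MP T) (MP (einstein A (MP T))) in
  let C := einstein (MP (einstein (MP Rt) A)) (MP Rt) in
  (B = MP A <-> C = prodMP Rt T A) /\ (B = prodMP Rt T A <-> C = MP A).
Proof.
move=> A B C.
apply: main.
- by rewrite /A !einA P1r.
- by rewrite /A !einA P1x.
Qed.
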